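(* Let $K$ be a field of characteristic $p>2$, $m\ge1$, and let $O_1(m)$ be the divided power algebra equipped with the product $a\star b=\partial(ab)$. Then the space of multilinear polynomial identities of degree $4$ of $(O_1(m),\star)$ is generated by the polynomials (products written as juxtaposition and meaning $\star$) $$Tortken(t_1,t_2,t_3,t_4)=(t_1t_2)(t_3t_4)-(t_1t_4)(t_3t_2)-(t_1(t_2t_3))t_4+((t_1t_2)t_3)t_4+(t_1(t_4t_3))t_2-((t_1t_4)t_3)t_2,$$ $$Com(t_1,t_2)=t_1t_2-t_2t_1,$$ and, only in the case $(p,m)=(3,1)$, additionally $$Tortken'(t_1,t_2,t_3,t_4)=(t_1t_3)(t_2t_4)+(t_1t_4)(t_2t_3)+((t_1t_3)t_4)t_2+((t_1t_4)t_2)t_3+((t_2t_3)t_1)t_4+((t_2t_4)t_3)t_1;$$ i.e. every multilinear degree-4 identity of this algebra is a consequence of these identities.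
   Context: $O_1(m)$ has basis $x^{(i)}$, $0\le i\le p^m-1$, product $x^{(i)}x^{(j)}=\binom{i+j}{j}x^{(i+j)}$ (zero if $i+j\ge p^m$), and derivation $\partial$ with $\partial x^{(i)}=x^{(i-1)}$, $\partial x^{(0)}=0$. Equivalently, with $e_i=x^{(i+1)}$, $-1\le i\le p^m-2$, one has $e_i\star e_j=\binom{i+j+2}{i+1}e_{i+j}$. *)

(* Defs.v *)
From HB Require Import structures.
From mathcomp Require Import all_boot all_order all_algebra.
Set Implicit Arguments. Unset Strict Implicit. Unset Printing Implicit Defensive.
Import Order.TTheory GRing.Theory Num.Theory.
Local Open Scope ring_scope.

(* The divided power algebra O_1(m) over K (char p), as row vectors of     *)
(* length p^m : coordinate i is the coefficient of x^(i).                  *)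
Section Divided.
Variables (K : fieldType) (p m : nat).
Local Notation n := (p ^ m)%N.

(* x^(i) x^(j) = C(i+j, j) x^(i+j), zero if i + j >= p^m *)
Definition dp_mul (a b : 'rV[K]_n) : 'rV[K]_n :=
  \row_(k < n) \sum_(i < n) \sum_(j < n | (i + j)%N == k)
      ('C(i + j, j))%:R * (a 0 i * b 0 j).

Definition dp_der (a : 'rV[K]_n) : 'rV[K]_n :=
  \row_(k < n) \sum_(i < n | val i == k.+1) a 0 i.

Definition dp_star (a b : 'rV[K]_n) : 'rV[K]_n := dp_der (dp_mul a b).
End Divided.

(* Polynomials are given syntactically (napoly); their value in the free    *)
(* algebra is the coefficient function [na_coef] on nonassociative monomials. *)
Inductive nterm : Type := NVar of nat | NMul of nterm & nterm.

Fixpoint leaves (t : nterm) : seq nat :=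
  match t with NVar i => [:: i] | NMul a b => leaves a ++ leaves b end.

Inductive napoly (K : Type) : Type :=
| PZero
| PVar of nat
| PAdd of napoly K & napoly K
| PScale of K & napoly K
| PMul of napoly K & napoly K.
Arguments PZero {K}.
Arguments PVar {K}.

(* propositional list membership (napoly has no decidable equality) *)
Fixpoint inseq (T : Type) (x : T) (s : seq T) : Prop :=
  match s with [::] => False | y :: s' => y = x \/ inseq x s' end.

Section FreeAlg.
Variable K : fieldType.

Fixpoint na_coef (f : napoly K) (t : nterm) : K :=
  match f with
  | PZero => 0
  | PVar i => match t with NVar j => if i == j then 1 else 0 | _ => 0 end
  | PAdd f g => na_coef f t + na_coef g t
  | PScale c f => c * na_coef f t
  | PMul f g => match t with NMul a b => na_coef f a * na_coef g b | _ => 0 end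
  end.

Fixpoint na_subst (s : nat -> napoly K) (f : napoly K) : napoly K :=
  match f with
  | PZero => PZero
  | PVar i => s i
  | PAdd f g => PAdd (na_subst s f) (na_subst s g)
  | PScale c f => PScale c (na_subst s f)
  | PMul f g => PMul (na_subst s f) (na_subst s g)
  end.

Fixpoint na_eval (V : lmodType K) (mul : V -> V -> V) (v : nat -> V) (f : napoly K) : V :=
  match f with
  | PZero => 0
  | PVar i => v i
  | PAdd f g => na_eval mul v f + na_eval mul v g
  | PScale c f => c *: na_eval mul v f
  | PMul f g => mul (na_eval mul v f) (na_eval mul v g)
  end.

Definition is_identity (V : lmodType K) (mul : V -> V -> V) (f : napoly K) : Prop :=
  forall v : nat -> V, na_eval mul v f = 0.

Definition multilin4 (f : napoly K) : Prop :=
  forall t : nterm, na_coef f t != 0 -> perm_eq (leaves t) [:: 1; 2; 3; 4]%N.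

(* f is a consequence of the identities in S, i.e. f lies in the T-ideal
   of the free algebra generated by S: the ideal generated by all
   substitution instances of elements of S (membership taken modulo
   equality in the free algebra, i.e. equality of coefficient functions) *)
Inductive conseq (S : seq (napoly K)) : napoly K -> Prop :=
| conseq_gen g (s : nat -> napoly K) : inseq g S -> conseq S (na_subst s g)
| conseq_zero : conseq S PZero
| conseq_add f g : conseq S f -> conseq S g -> conseq S (PAdd f g)
| conseq_scale c f : conseq S f -> conseq S (PScale c f)
| conseq_mull h f : conseq S f -> conseq S (PMul h f)
| conseq_mulr h f : conseq S f -> conseq S (PMul f h)
| conseq_ext f g : conseq S f -> na_coef f =1 na_coef g -> conseq S g.

Local Notation "x * y" := (PMul x y).
Local Notation "x + y" := (PAdd x y).
Local Notation "x - y" := (PAdd x (PScale (-1) y)).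
Local Notation t1 := (PVar 1%N).
Local Notation t2 := (PVar 2%N).
Local Notation t3 := (PVar 3%N).
Local Notation t4 := (PVar 4%N).

Definition Tortken : napoly K :=
  (t1 * t2) * (t3 * t4) - (t1 * t4) * (t3 * t2) - (t1 * (t2 * t3)) * t4
  + ((t1 * t2) * t3) * t4 + (t1 * (t4 * t3)) * t2 - ((t1 * t4) * t3) * t2.

Definition Com : napoly K := t1 * t2 - t2 * t1.

Definition Tortken' : napoly K :=
  (t1 * t3) * (t2 * t4) + (t1 * t4) * (t2 * t3) + ((t1 * t3) * t4) * t2
  + ((t1 * t4) * t2) * t3 + ((t2 * t3) * t1) * t4 + ((t2 * t4) * t3) * t1.

Definition O1_gens (p m : nat) : seq (napoly K) :=
  if (p == 3%N) && (m == 1%N) then [:: Tortken; Com; Tortken']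
  else [:: Tortken; Com].
End FreeAlg.

(* Main.v *)
Require Import Defs.
From HB Require Import structures.
From mathcomp Require Import all_boot all_order all_algebra.
From mathcomp Require Import zify ring lra.
Set Implicit Arguments. Unset Strict Implicit. Unset Printing Implicit Defensive.
Import Order.TTheory GRing.Theory Num.Theory.
Local Open Scope ring_scope.

Fixpoint nterm_eqb (a b : nterm) : bool :=
  match a, b with
  | NVar i, NVar j => i == j
  | NMul a1 a2, NMul b1 b2 => nterm_eqb a1 b1 && nterm_eqb a2 b2
  | _, _ => false
  end.

Lemma nterm_eqP : Equality.axiom nterm_eqb.
Proof.
elim=> [i|a1 IH1 a2 IH2] [j|b1 b2] /=; try by constructor.
- by apply: (iffP eqP) => [->|[]].
- apply: (iffP andP) => [[/IH1 -> /IH2 ->]//|[<- <-]].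
  by split; [apply/IH1|apply/IH2].
Qed.
HB.instance Definition _ := hasDecEq.Build nterm nterm_eqP.

Lemma eqNVar i j : (NVar i == NVar j) = (i == j). Proof. by []. Qed.
Lemma eqNMul a b c d : (NMul a b == NMul c d) = (a == c) && (b == d). Proof. by []. Qed.
Lemma eqNVM i a b : (NVar i == NMul a b) = false. Proof. by []. Qed.
Lemma eqNMV i a b : (NMul a b == NVar i) = false. Proof. by []. Qed.

Section Free.
Variable K : fieldType.

Fixpoint mono (t : nterm) : napoly K :=
  match t with NVar i => PVar i | NMul a b => PMul (mono a) (mono b) end.

Fixpoint flat (f : napoly K) : seq (K * nterm) :=
  match f with
  | PZero => [::]
  | PVar i => [:: (1, NVar i)]
  | PAdd f g => flat f ++ flat g
  | PScale c f => [seq (c * x.1, x.2) | x <- flat f]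
  | PMul f g => [seq (x.1 * y.1, NMul x.2 y.2) | x <- flat f, y <- flat g]
  end.

Definition cf (l : seq (K * nterm)) u := \sum_(x <- l) x.1 * (x.2 == u)%:R.

Lemma cf_cons x l u : cf (x :: l) u = x.1 * (x.2 == u)%:R + cf l u.
Proof. by rewrite /cf big_cons. Qed.
Lemma cf_cat l1 l2 u : cf (l1 ++ l2) u = cf l1 u + cf l2 u.
Proof. by rewrite /cf big_cat. Qed.

Lemma coef_flat f u : na_coef f u = cf (flat f) u.
Proof.
elim: f u => [|i|f IHf g IHg|c f IHf|f IHf g IHg] u /=.
- by rewrite /cf big_nil.
- rewrite /cf big_seq1 /= mul1r; case: u => [j|a b] //=.
  by rewrite eqNVar; case: eqP.
- by rewrite cf_cat IHf IHg.
- by rewrite IHf /cf big_map mulr_sumr; apply: eq_bigr => x _; rewrite mulrA.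
- rewrite /cf big_allpairs_dep; case: u => [j|a b].
    by rewrite big1 // => x _; rewrite big1 // => y _; rewrite eqNMV mulr0.
  rewrite IHf IHg /cf mulr_suml; apply: eq_bigr => x _.
  rewrite mulr_sumr; apply: eq_bigr => y _.
  rewrite eqNMul -mulnb natrM /=; ring.
Qed.

Lemma coef_mono t u : na_coef (mono t) u = (t == u)%:R.
Proof.
elim: t u => [i|a IHa b IHb] [j|c d] //=.
- by rewrite eqNVar; case: eqP.
- by rewrite IHa IHb eqNMul -mulnb natrM.
Qed.

Section Eval.
Variables (V : lmodType K) (mul : V -> V -> V).
Hypothesis mulDl : forall x y z, mul (x + y) z = mul x z + mul y z.
Hypothesis mulDr : forall x y z, mul x (y + z) = mul x y + mul x z.
Hypothesis mulZl : forall a x y, mul (a *: x) y = a *: mul x y.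
Hypothesis mulZr : forall a x y, mul x (a *: y) = a *: mul x y.

Lemma emul0l x : mul 0 x = 0.
Proof. by rewrite -[X in mul X _](scale0r (0:V)) mulZl scale0r. Qed.
Lemma emul0r x : mul x 0 = 0.
Proof. by rewrite -[X in mul _ X](scale0r (0:V)) mulZr scale0r. Qed.

Fixpoint meval (v : nat -> V) (t : nterm) : V :=
  match t with NVar i => v i | NMul a b => mul (meval v a) (meval v b) end.

Lemma eval_flat v f : na_eval mul v f = \sum_(x <- flat f) x.1 *: meval v x.2.
Proof.
elim: f => [|i|f IHf g IHg|c f IHf|f IHf g IHg] /=.
- by rewrite big_nil.
- by rewrite big_seq1 scale1r.
- by rewrite big_cat IHf IHg.
- by rewrite IHf big_map scaler_sumr; apply: eq_bigr => x _; rewrite scalerA.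
- rewrite big_allpairs_dep IHf IHg.
  rewrite (big_morph (fun x => mul x _) (fun x y => mulDl x y _) (emul0l _)).
  apply: eq_bigr => x _ /=.
  rewrite (big_morph (fun y => mul _ y) (fun x y => mulDr _ x y) (emul0r _)).
  apply: eq_bigr => y _ /=.
  by rewrite mulZl mulZr scalerA mulrC.
Qed.

Lemma sum_delta (U : seq nterm) (G : nterm -> V) t :
  uniq U -> t \in U -> \sum_(u <- U) (t == u)%:R *: G u = G t.
Proof.
move=> uU tU; rewrite (big_rem t) //= eqxx scale1r big_seq_cond big1 ?addr0 //.
move=> u /andP[uR _]; have: u != t.
  by apply: contraTneq uR => ->; rewrite mem_rem_uniqF.
by rewrite eq_sym => /negbTE ->; rewrite scale0r.
Qed.

Lemma regroup (l : seq (K * nterm)) (U : seq nterm) (G : nterm -> V) :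
  uniq U -> {subset map snd l <= U} ->
  \sum_(x <- l) x.1 *: G x.2 = \sum_(u <- U) cf l u *: G u.
Proof.
move=> uU; elim: l => [|x l IH] sub.
  by rewrite big_nil big1 // => u _; rewrite /cf big_nil scale0r.
rewrite big_cons IH; last by move=> y yl; apply: sub; rewrite inE yl orbT.
under [in RHS]eq_bigr => u _ do rewrite cf_cons scalerDl -scalerA.
rewrite big_split /= -scaler_sumr sum_delta //.
by apply: sub; rewrite inE eqxx.
Qed.

Lemma eval_coef f g : na_coef f =1 na_coef g -> forall v, na_eval mul v f = na_eval mul v g.
Proof.
move=> e v; rewrite !eval_flat.
set U := undup (map snd (flat f ++ flat g)).
have uU : uniq U by apply: undup_uniq.
rewrite (regroup (l := flat f) (meval v) uU); last by move=> y yl; rewrite mem_undup map_cat mem_cat yl.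
rewrite (regroup (l := flat g) (meval v) uU); last by move=> y yl; rewrite mem_undup map_cat mem_cat yl orbT.
by apply: eq_bigr => u _; rewrite -!coef_flat e.
Qed.

Lemma eval_subst v s f :
  na_eval mul v (na_subst s f) = na_eval mul (fun i => na_eval mul v (s i)) f.
Proof. by elim: f => //= [f -> g ->|c f ->|f -> g ->]. Qed.

Lemma sound S : (forall g, inseq g S -> is_identity mul g) ->
  forall f, conseq S f -> is_identity mul f.
Proof.
move=> hS f; elim => {f}.
- by move=> g s gS v; rewrite eval_subst; apply: hS.
- by [].
- by move=> f g _ hf _ hg v /=; rewrite hf hg addr0.
- by move=> c f _ hf v /=; rewrite hf scaler0.
- by move=> h f _ hf v /=; rewrite hf emul0r.
- by move=> h f _ hf v /=; rewrite hf emul0l.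
- by move=> f g _ hf e v; rewrite -(eval_coef e) hf.
Qed.
End Eval.
End Free.


Lemma ifr (K : nzRingType) (b : bool) (x : K) : (if b then x else 0) = b%:R * x.
Proof. by case: b; rewrite ?mul1r ?mul0r. Qed.

Lemma binA a b c :
  ('C(a + b, b) * 'C(a + b + c, c) = 'C(b + c, c) * 'C(a + b + c, b + c))%N.
Proof.
have binf x y : ('C(x + y, y) * (y`! * x`!) = (x + y)`!)%N.
  by have := bin_fact (leq_addl x y); rewrite addnK.
have pos : (0 < a`! * b`! * c`!)%N by rewrite !muln_gt0 !fact_gt0.
apply/eqP; rewrite -(eqn_pmul2r pos); apply/eqP.
transitivity ('C(a + b + c, c) * (c`! * ('C(a + b, b) * (b`! * a`!))))%N; first by ring.
rewrite binf binf.
transitivity ('C(a + (b + c), b + c) * ((b + c)`! * a`!) * 1)%N; last first.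
  by rewrite -(binf b c) addnA; ring.
by rewrite binf addnA muln1.
Qed.

Lemma dvd_bin_pow p m j : prime p -> (0 < j < p ^ m)%N -> (p %| 'C(p ^ m, j))%N.
Proof.
move=> pp /andP[j0 jlt].
apply/negPn/negP => ndvd.
have cop : coprime (p ^ m) 'C(p ^ m, j).
  by apply: coprimeXl; rewrite prime_coprime.
have h : (p ^ m %| 'C(p ^ m, j) * j)%N.
  case: j j0 jlt {ndvd cop} => // j _ jlt.
  rewrite mulnC -mul_bin_diag; exact: dvdn_mulr.
rewrite mulnC (Gauss_dvdl _ cop) in h.
by have := dvdn_leq j0 h; rewrite leqNgt jlt.
Qed.

Section DP.
Variables (K : fieldType) (p m : nat).
Local Notation n := (p ^ m)%N.
Local Notation V := 'rV[K]_n.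
Local Notation mul := (@dp_mul K p m).
Local Notation der := (@dp_der K p m).

Definition e (k : nat) : V := \row_(j < n) ((j : nat) == k)%:R.

Lemma eE (j : 'I_n) : e j = 'e_j.
Proof. by apply/rowP => k; rewrite !mxE eqxx. Qed.

Lemma rowE (a : V) : a = \sum_(i < n) a 0 i *: e i.
Proof. by rewrite {1}(row_sum_delta a); apply: eq_bigr => i _; rewrite eE. Qed.

Lemma dmulDl a b c : mul (a + b) c = mul a c + mul b c.
Proof.
apply/rowP => k; rewrite !mxE -big_split; apply: eq_bigr => i _.
rewrite -big_split; apply: eq_bigr => j _; rewrite !mxE /=; ring.
Qed.
Lemma dmulDr a b c : mul a (b + c) = mul a b + mul a c.
Proof.
apply/rowP => k; rewrite !mxE -big_split; apply: eq_bigr => i _.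
rewrite -big_split; apply: eq_bigr => j _; rewrite !mxE /=; ring.
Qed.
Lemma dmulZl x a b : mul (x *: a) b = x *: mul a b.
Proof.
apply/rowP => k; rewrite !mxE mulr_sumr; apply: eq_bigr => i _.
rewrite mulr_sumr; apply: eq_bigr => j _; rewrite !mxE; ring.
Qed.
Lemma dmulZr x a b : mul a (x *: b) = x *: mul a b.
Proof.
apply/rowP => k; rewrite !mxE mulr_sumr; apply: eq_bigr => i _.
rewrite mulr_sumr; apply: eq_bigr => j _; rewrite !mxE; ring.
Qed.
Lemma derD a b : der (a + b) = der a + der b.
Proof. by apply/rowP => k; rewrite !mxE -big_split; apply: eq_bigr => i _; rewrite !mxE /=. Qed.
Lemma derZ x a : der (x *: a) = x *: der a.
Proof. by apply/rowP => k; rewrite !mxE mulr_sumr; apply: eq_bigr => i _; rewrite !mxE. Qed.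

Lemma dmul0l a : mul 0 a = 0.
Proof. by rewrite -[X in mul X _](scale0r (0:V)) dmulZl scale0r. Qed.
Lemma dmul0r a : mul a 0 = 0.
Proof. by rewrite -[X in mul _ X](scale0r (0:V)) dmulZr scale0r. Qed.
Lemma der0 : der 0 = 0.
Proof. by rewrite -[X in der X](scale0r (0:V)) derZ scale0r. Qed.

Lemma dmul_suml I r (P : pred I) (F : I -> V) b :
  mul (\sum_(i <- r | P i) F i) b = \sum_(i <- r | P i) mul (F i) b.
Proof. exact: (big_morph (fun x => mul x b) (fun x y => dmulDl x y b) (dmul0l b)). Qed.
Lemma dmul_sumr I r (P : pred I) (F : I -> V) b :
  mul b (\sum_(i <- r | P i) F i) = \sum_(i <- r | P i) mul b (F i).
Proof. exact: (big_morph (fun x => mul b x) (fun x y => dmulDr b x y) (dmul0r b)). Qed.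
Lemma der_sum I r (P : pred I) (F : I -> V) :
  der (\sum_(i <- r | P i) F i) = \sum_(i <- r | P i) der (F i).
Proof. exact: (big_morph der derD der0). Qed.

Lemma sum_delta_ord (G : nat -> K) i :
  \sum_(a < n) ((a : nat) == i)%:R * G a = (if (i < n)%N then G i else 0).
Proof.
case: ltnP => hi.
  rewrite (bigD1 (Ordinal hi)) //= eqxx mul1r big1 ?addr0 // => a ha.
  case: eqP => hh; last by rewrite GRing.mul0r.
  by case/eqP: ha; apply: val_inj.
rewrite big1 // => a _; case: eqP => h; last by rewrite GRing.mul0r.
by move: (ltn_ord a); rewrite h ltnNge hi.
Qed.

Lemma sum2_delta (F : nat -> nat -> K) i j :
  \sum_(a < n) \sum_(b < n) ((a : nat) == i)%:R * (((b : nat) == j)%:R * F a b)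
  = if (i < n)%N && (j < n)%N then F i j else 0.
Proof.
under eq_bigr => a _ do rewrite -mulr_sumr sum_delta_ord.
rewrite (sum_delta_ord (fun a => if (j < n)%N then F a j else 0)); case: (i < n)%N; case: (j < n)%N => //.
Qed.

Lemma mul_e i j :
  mul (e i) (e j) = (if (i + j < n)%N then 'C(i + j, j) else 0)%:R *: e (i + j).
Proof.
apply/rowP => k; rewrite !mxE.
transitivity (\sum_(a < n) \sum_(b < n) ((a:nat) == i)%:R * (((b:nat) == j)%:R *
   ((((a + b)%N == k)%:R * ('C(a + b, b))%:R : K)))).
  apply: eq_bigr => a _; rewrite big_mkcond; apply: eq_bigr => b _.
  by rewrite !mxE ifr /=; ring.
rewrite (sum2_delta (fun a b => (((a + b)%N == k)%:R * ('C(a + b, b))%:R : K))).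
case: ltnP => hij; case: ltnP => hi; case: ltnP => hj //=; try lia;
  rewrite ?mul0r ?mulr0 //.
- by rewrite eq_sym; case: eqP => _; rewrite ?mulr1 ?mulr0 ?mul1r ?mul0r.
- case: eqP => h; rewrite ?mul0r ?mulr0 //; move: (ltn_ord k); lia.
Qed.

Lemma der_e i : der (e i) = (0 < i < n)%N%:R *: e i.-1.
Proof.
apply/rowP => k; rewrite !mxE big_mkcond.
under eq_bigr => a _ do rewrite !mxE ifr.
rewrite (sum_delta_ord (fun a => ((a == i)%:R : K))).
case: (ltnP k.+1 n) => hk; case: i => [|i] /=; rewrite ?mulr0 ?mul0r //.
- rewrite eqSS; case: eqP => [h|_]; last by rewrite mulr0.
  by rewrite -h hk mul1r.
- case: eqP => [h|_]; last by rewrite mulr0.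
  by rewrite -h ltnNge hk mul0r.
Qed.

Lemma mulE a b : mul a b = \sum_(i < n) \sum_(j < n) (a 0 i * b 0 j) *: mul (e i) (e j).
Proof.
rewrite {1}(rowE a) dmul_suml; apply: eq_bigr => i _.
rewrite dmulZl {1}(rowE b) dmul_sumr scaler_sumr; apply: eq_bigr => j _.
by rewrite dmulZr scalerA.
Qed.

Lemma assoc_e i j l : mul (mul (e i) (e j)) (e l) = mul (e i) (mul (e j) (e l)).
Proof.
rewrite !mul_e dmulZl dmulZr !mul_e !scalerA addnA -!natrM; congr (_%:R *: _).
case: (ltnP (i + j + l) n) => h.
  have h1 : (i + j < n)%N by lia.
  have h2 : (j + l < n)%N by lia.
  by rewrite h1 h2 binA.
by rewrite !muln0.
Qed.

Lemma dmulA a b c : mul (mul a b) c = mul a (mul b c).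
Proof.
rewrite (mulE a b) dmul_suml [in RHS](rowE a) dmul_suml; apply: eq_bigr => i _.
rewrite dmul_suml dmulZl (mulE b c) dmul_sumr scaler_sumr; apply: eq_bigr => j _.
rewrite dmulZl [in LHS](rowE c) dmul_sumr scaler_sumr dmul_sumr scaler_sumr.
apply: eq_bigr => l _.
by rewrite !dmulZr !scalerA assoc_e; congr (_ *: _); ring.
Qed.

Lemma comm_e i j : mul (e i) (e j) = mul (e j) (e i).
Proof.
rewrite !mul_e [(j + i)%N]addnC; case: ifP => // _.
by have := @bin_sub (i + j) i (leq_addr j i); rewrite addKn => ->.
Qed.

Lemma dmulC a b : mul a b = mul b a.
Proof.
rewrite (mulE a b) (mulE b a) exchange_big; apply: eq_bigr => i _.
by apply: eq_bigr => j _; rewrite comm_e mulrC.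
Qed.

Lemma dmul1 a : mul (e 0) a = a.
Proof.
rewrite {1}(rowE a) dmul_sumr [RHS](rowE a); apply: eq_bigr => i _.
by rewrite dmulZr mul_e add0n ltn_ord binn scale1r.
Qed.

Lemma derE a : der a = \sum_(i < n) a 0 i *: der (e i).
Proof. by rewrite {1}(rowE a) der_sum; apply: eq_bigr => i _; rewrite derZ. Qed.

Hypothesis pchar : p \in [pchar K].

Lemma leib_e i j : (i < n)%N -> (j < n)%N ->
  der (mul (e i) (e j)) = mul (der (e i)) (e j) + mul (e i) (der (e j)).
Proof.
have pp : prime p := pcharf_prime pchar.
move=> hi hj; rewrite !der_e mul_e derZ der_e dmulZl dmulZr !mul_e !scalerA -!natrM.
case: i hi => [|i] hi; case: j hj => [|j] hj /=.
- by rewrite muln0 mul0n scale0r addr0.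
- by rewrite !add0n hj (ltnW hj) !binn mul0n scale0r add0r.
- by rewrite !addn0 hi (ltnW hi) !bin0 mul0n scale0r addr0.
rewrite !addSn !addnS hi hj !mul1n -scalerDl -natrD; congr (_ *: _).
set s := (i + j)%N.
case: (ltnP s.+2 n) => h2.
  by rewrite (ltnW h2) muln1 binS.
rewrite muln0.
case: (ltnP s.+1 n) => h1; last by [].
have e1 : s.+2 = n by lia.
rewrite -binS e1; apply/esym/eqP.
by rewrite -(dvdn_pcharf pchar); apply: dvd_bin_pow => //; lia.
Qed.

Lemma leib a b : der (mul a b) = mul (der a) b + mul a (der b).
Proof.
rewrite (mulE a b) der_sum.
have -> : mul (der a) b = \sum_(i < n) \sum_(j < n) (a 0 i * b 0 j) *: mul (der (e i)) (e j).
  rewrite (derE a) dmul_suml; apply: eq_bigr => i _.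
  rewrite dmulZl {1}(rowE b) dmul_sumr scaler_sumr; apply: eq_bigr => j _.
  by rewrite dmulZr scalerA.
have -> : mul a (der b) = \sum_(i < n) \sum_(j < n) (a 0 i * b 0 j) *: mul (e i) (der (e j)).
  rewrite {1}(rowE a) dmul_suml; apply: eq_bigr => i _.
  rewrite dmulZl (derE b) dmul_sumr scaler_sumr; apply: eq_bigr => j _.
  by rewrite dmulZr scalerA.
rewrite -big_split; apply: eq_bigr => i _; rewrite der_sum -big_split.
by apply: eq_bigr => j _; rewrite derZ leib_e // scalerDr.
Qed.
End DP.

Section Abs.
Variable R : comPzRingType.
Variable D : R -> R.
Hypothesis DD : forall x y, D (x + y) = D x + D y.
Hypothesis DM : forall x y, D (x * y) = D x * y + x * D y.

Lemma tortken_abs t1 t2 t3 t4 :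
  let st x y := D (x * y) in
  st (st t1 t2) (st t3 t4) - st (st t1 t4) (st t3 t2) - st (st t1 (st t2 t3)) t4
  + st (st (st t1 t2) t3) t4 + st (st t1 (st t4 t3)) t2 - st (st (st t1 t4) t3) t2 = 0.
Proof.
rewrite /=; do 6 rewrite ?(DM, DD).
ring.
Qed.
End Abs.


Section Inst.
Variables (K : fieldType) (p m : nat).
Definition dpR : Type := 'rV[K]_(p ^ m).
HB.instance Definition _ := GRing.Zmodule.on dpR.
HB.instance Definition _ := @GRing.Zmodule_isComPzRing.Build dpR
  (@e K p m 0) (@dp_mul K p m)
  (fun a b c => esym (@dmulA K p m a b c)) (@dmulC K p m) (@dmul1 K p m) (@dmulDl K p m).

Lemma tortken_id : p \in [pchar K] -> is_identity (@dp_star K p m) (Tortken K).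
Proof.
move=> pc v /=; rewrite !scaleN1r.
have := @tortken_abs dpR (@dp_der K p m) (@derD K p m) (@leib K p m pc) (v 1%N) (v 2%N) (v 3%N) (v 4%N).
by [].
Qed.

Lemma com_id : is_identity (@dp_star K p m) (Com K).
Proof. by move=> v /=; rewrite scaleN1r /dp_star dmulC subrr. Qed.
End Inst.


Section Three.
Variable K : fieldType.
Hypothesis pc : 3 \in [pchar K].
Local Notation V := 'rV[K]_(3 ^ 1).
Definition i0 : 'I_(3 ^ 1) := ord0.
Definition i1 : 'I_(3 ^ 1) := lift ord0 ord0.
Definition i2 : 'I_(3 ^ 1) := lift ord0 (lift ord0 ord0).

Definition mk (x y z : K) : V := \row_(k < 3 ^ 1) nth 0 [:: x; y; z] k.

Lemma three0 : (3%:R : K) = 0.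
Proof. by apply/eqP; rewrite -(dvdn_pcharf pc). Qed.

Lemma two_sanity : True. Proof. by []. Qed.

Lemma star3 (a b : V) : dp_star a b =
  mk (a 0 i1 * b 0 i0 + a 0 i0 * b 0 i1)
     (a 0 i2 * b 0 i0 - a 0 i1 * b 0 i1 + a 0 i0 * b 0 i2) 0.
Proof.
apply/rowP => k; rewrite !mxE big_mkcond /= !big_ord_recl big_ord0 /=.
case: k => [[|[|[|k]]] hk] /=; rewrite ?big_mkcond /= ?big_ord_recl ?big_ord0 /= ?mxE /=.
all: try (under eq_bigr => i _ do rewrite big_mkcond; rewrite /= !big_ord_recl !big_ord0 /=).
all: rewrite /bump /= ?add0n ?addn0 ?binn ?bin0 ?bin1 /i0 /i1 /i2 //.
- by rewrite /bump /=; ring.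
- have h2 : ((1 + 1)%N%:R : K) = -1.
    by apply/eqP; rewrite -subr_eq0 opprK natr1 three0.
  by rewrite h2; ring.
by rewrite !addr0.
Qed.

Lemma mk0 x y z : mk x y z 0 i0 = x. Proof. by rewrite mxE. Qed.
Lemma mk1 x y z : mk x y z 0 i1 = y. Proof. by rewrite mxE. Qed.
Lemma mk2 x y z : mk x y z 0 i2 = z. Proof. by rewrite mxE. Qed.

Lemma tk3_id : is_identity (@dp_star K 3 1) (Tortken' K).
Proof.
move=> v /=; rewrite !(star3, mk0, mk1, mk2).
apply/rowP => k; rewrite !mxE.
case: k => [[|[|[|k]]] hk] //=.
- transitivity (3%:R * (1%:R * (v 1%N 0 i2) * (v 2%N 0 i1) * (v 3%N 0 i0) * (v 4%N 0 i0) + 1%:R * (v 1%N 0 i0) * (v 2%N 0 i1) * (v 3%N 0 i2) * (v 4%N 0 i0) + 1%:R * (v 1%N 0 i0) * (v 2%N 0 i0) * (v 3%N 0 i2) * (v 4%N 0 i1) + 1%:R * (v 1%N 0 i1) * (v 2%N 0 i2) * (v 3%N 0 i0) * (v 4%N 0 i0) + 1%:R * (v 1%N 0 i1) * (v 2%N 0 i0) * (v 3%N 0 i0) * (v 4%N 0 i2) + 1%:R * (v 1%N 0 i0) * (v 2%N 0 i0) * (v 3%N 0 i1) * (v 4%N 0 i2) + 1%:R * (v 1%N 0 i2) * (v 2%N 0 i0) * (v 3%N 0 i1) * (v 4%N 0 i0) + 1%:R * (v 1%N 0 i0) * (v 2%N 0 i2) * (v 3%N 0 i0) * (v 4%N 0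 i1)) : K); first by rewrite /i0 /i1 /i2; ring.
  by rewrite three0 mul0r.
- transitivity (3%:R * ((- 2%:R) * (v 1%N 0 i1) * (v 2%N 0 i1) * (v 3%N 0 i1) * (v 4%N 0 i1) + 1%:R * (v 1%N 0 i1) * (v 2%N 0 i0) * (v 3%N 0 i1) * (v 4%N 0 i2) + 1%:R * (v 1%N 0 i0) * (v 2%N 0 i1) * (v 3%N 0 i2) * (v 4%N 0 i1) + 1%:R * (v 1%N 0 i2) * (v 2%N 0 i1) * (v 3%N 0 i1) * (v 4%N 0 i0) + 1%:R * (v 1%N 0 i1) * (v 2%N 0 i2) * (v 3%N 0 i0) * (v 4%N 0 i1)) : K); first by rewrite /i0 /i1 /i2; ring.
  by rewrite three0 mul0r.
- by rewrite !addr0.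
Qed.
End Three.


Definition ip := seq (int * nterm).

Fixpoint icoef (s : ip) (u : nterm) : int :=
  match s with [::] => 0 | x :: s => (if x.2 == u then x.1 else 0) + icoef s u end.

Definition ipeq (q : nat) (s1 s2 : ip) : bool :=
  all (fun u => ((icoef s1 u - icoef s2 u) %% (q : int))%Z == 0) (map snd (s1 ++ s2)).

Definition scale (c : int) (s : ip) : ip := map (fun x => (c * x.1, x.2)) s.

Fixpoint nle (a b : nterm) : bool :=
  match a, b with
  | NVar i, NVar j => (i <= j)%N
  | NVar _, NMul _ _ => true
  | NMul _ _, NVar _ => false
  | NMul a1 a2, NMul b1 b2 => if a1 == b1 then nle a2 b2 else nle a1 b1
  end.

Definition cmul (x y : nterm) := if nle x y then NMul x y else NMul y x.

Fixpoint canon (t : nterm) : nterm :=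
  match t with NVar i => NVar i | NMul a b => cmul (canon a) (canon b) end.

Definition canon_ip (s : ip) : ip := map (fun x => (x.1, canon x.2)) s.

Definition gen := (bool * seq nat)%type.

Section Inst.
Variable f : nat -> nat.
Local Notation "'V' k" := (NVar (f k)) (at level 2).
Definition iTk : ip :=
  [:: (1%Z, NMul (NMul (V 1) (V 2)) (NMul (V 3) (V 4)));
      ((-1)%Z, NMul (NMul (V 1) (V 4)) (NMul (V 3) (V 2)));
      ((-1)%Z, NMul (NMul (V 1) (NMul (V 2) (V 3))) (V 4));
      (1%Z, NMul (NMul (NMul (V 1) (V 2)) (V 3)) (V 4));
      (1%Z, NMul (NMul (V 1) (NMul (V 4) (V 3))) (V 2));
      ((-1)%Z, NMul (NMul (NMul (V 1) (V 4)) (V 3)) (V 2))].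
Definition iTp : ip :=
  [:: (1%Z, NMul (NMul (V 1) (V 3)) (NMul (V 2) (V 4)));
      (1%Z, NMul (NMul (V 1) (V 4)) (NMul (V 2) (V 3)));
      (1%Z, NMul (NMul (NMul (V 1) (V 3)) (V 4)) (V 2));
      (1%Z, NMul (NMul (NMul (V 1) (V 4)) (V 2)) (V 3));
      (1%Z, NMul (NMul (NMul (V 2) (V 3)) (V 1)) (V 4));
      (1%Z, NMul (NMul (NMul (V 2) (V 4)) (V 3)) (V 1))].
End Inst.

Definition inst (g : gen) : ip :=
  let f := fun i => nth 0%N (0%N :: g.2) i in if g.1 then iTp f else iTk f.

Definition combo (L : seq (int * gen)) : ip :=
  flatten [seq scale x.1 (canon_ip (inst x.2)) | x <- L].

Definition neg (s : ip) : ip := scale (-1) s.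

Section Refl.
Variable K : fieldType.
Local Notation mono := (@mono K).

Fixpoint ip2np (s : ip) : napoly K :=
  match s with [::] => PZero | x :: s => PAdd (PScale (x.1%:~R) (mono x.2)) (ip2np s) end.

Definition cfK (s : ip) u : K := \sum_(x <- s) x.1%:~R * (x.2 == u)%:R.

Lemma coef_ip2np s u : na_coef (ip2np s) u = cfK s u.
Proof.
elim: s => [|x s IH]; first by rewrite /cfK big_nil.
by rewrite /= IH coef_mono /cfK big_cons.
Qed.

Lemma cfK_icoef s u : cfK s u = (icoef s u)%:~R.
Proof.
elim: s => [|x s IH]; first by rewrite /cfK big_nil.
rewrite /cfK big_cons -/(cfK s u) IH /= intrD; case: eqP => _.
  by rewrite mulr1. by rewrite mulr0.
Qed.

Lemma icoef_out s u : u \notin map snd s -> icoef s u = 0.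
Proof.
elim: s => [|x s IH] //=; rewrite inE negb_or => /andP[h1 h2].
by rewrite IH // eq_sym (negbTE h1) add0r.
Qed.

Lemma intr_dvd (q : nat) (z : int) : (q%:R : K) = 0 -> (z %% (q : int))%Z = 0 -> (z%:~R : K) = 0.
Proof.
move=> hq hz; rewrite (divz_eq z q) hz addr0 intrM.
by rewrite -pmulrn hq mulr0.
Qed.

Lemma ipeqP (q : nat) s1 s2 : (q%:R : K) = 0 -> ipeq q s1 s2 -> forall u, cfK s1 u = cfK s2 u.
Proof.
move=> hq /allP h u; rewrite !cfK_icoef.
case: (boolP (u \in map snd (s1 ++ s2))) => hu.
  have /eqP := h u hu => /(intr_dvd hq); rewrite intrB => /eqP.
  by rewrite subr_eq0 => /eqP.
rewrite map_cat mem_cat negb_or in hu; case/andP: hu => h1 h2.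
by rewrite !icoef_out.
Qed.

Lemma cfK_cat s1 s2 u : cfK (s1 ++ s2) u = cfK s1 u + cfK s2 u.
Proof. by rewrite /cfK big_cat. Qed.
Lemma cfK_scale c s u : cfK (scale c s) u = c%:~R * cfK s u.
Proof.
rewrite /cfK big_map mulr_sumr; apply: eq_bigr => x _.
by rewrite /= intrM mulrA.
Qed.
Lemma cfK_nil u : cfK [::] u = 0. Proof. by rewrite /cfK big_nil. Qed.
Lemma cfK_cons x s u : cfK (x :: s) u = x.1%:~R * (x.2 == u)%:R + cfK s u.
Proof. by rewrite /cfK big_cons. Qed.

Variable S : seq (napoly K).

Lemma conseq_ip_ext s1 s2 : conseq S (ip2np s1) -> (forall u, cfK s1 u = cfK s2 u) ->
  conseq S (ip2np s2).
Proof. by move=> h e; apply: conseq_ext h _ => u; rewrite !coef_ip2np e. Qed.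

Lemma conseq_ip_cat s1 s2 : conseq S (ip2np s1) -> conseq S (ip2np s2) ->
  conseq S (ip2np (s1 ++ s2)).
Proof.
move=> h1 h2; apply: conseq_ext (conseq_add h1 h2) _ => u.
by rewrite /= !coef_ip2np cfK_cat.
Qed.

Lemma conseq_ip_scale c s : conseq S (ip2np s) -> conseq S (ip2np (scale c s)).
Proof.
move=> h; apply: conseq_ext (conseq_scale (c%:~R) h) _ => u.
by rewrite /= !coef_ip2np cfK_scale.
Qed.

Lemma conseq_ip_nil : conseq S (ip2np [::]).
Proof. exact: conseq_zero. Qed.

Hypothesis HC : inseq (Com K) S.

Lemma canon_X t : conseq S (ip2np [:: (1%Z, t); ((-1)%Z, canon t)]).
Proof.
elim: t => [i|a IHa b IHb].
  apply: conseq_ip_ext conseq_ip_nil _ => u.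
  by rewrite !cfK_cons cfK_nil /=; ring.
have Y1 := conseq_mulr (mono b) IHa.
have Y2 := conseq_mull (mono (canon a)) IHb.
change (canon (NMul a b)) with (cmul (canon a) (canon b)); rewrite /cmul; case: ifP => _.
  apply: conseq_ext (conseq_add Y1 Y2) _ => u; rewrite coef_ip2np.
  case: u => [j|x y]; rewrite /= !cfK_cons cfK_nil /= ?eqNMV.
    by rewrite !mulr0 !addr0.
  rewrite !coef_mono /= !eqNMul -!mulnb !natrM; ring.
have Y3 := @conseq_gen _ S (Com K) (fun i => if i == 1%N then mono (canon a) else mono (canon b)) HC.
apply: conseq_ext (conseq_add (conseq_add Y1 Y2) Y3) _ => u; rewrite coef_ip2np.
case: u => [j|x y]; rewrite /= !cfK_cons cfK_nil /= ?eqNMV.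
  by rewrite !mulr0 !addr0.
rewrite !coef_mono /= !eqNMul -!mulnb !natrM; ring.
Qed.

Hypothesis HT : inseq (Tortken K) S.

Lemma iTk_conseq f : conseq S (ip2np (iTk f)).
Proof.
apply: conseq_ext (conseq_gen (fun i => PVar (f i)) HT) _ => u.
rewrite coef_flat coef_ip2np /cf /= !cfK_cons cfK_nil !big_cons big_nil /=; ring.
Qed.

Lemma iTp_conseq f : inseq (Tortken' K) S -> conseq S (ip2np (iTp f)).
Proof.
move=> HP; apply: conseq_ext (conseq_gen (fun i => PVar (f i)) HP) _ => u.
rewrite coef_flat coef_ip2np /cf /= !cfK_cons cfK_nil !big_cons big_nil /=; ring.
Qed.

Definition diffl (s : ip) : ip := flatten [seq [:: (x.1, x.2); (- x.1, canon x.2)] | x <- s].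

Lemma cfK_diff s u : cfK (canon_ip s) u = cfK s u - cfK (diffl s) u.
Proof.
elim: s => [|x s IH]; first by rewrite !cfK_nil subr0.
have -> : diffl (x :: s) = (x.1, x.2) :: (- x.1, canon x.2) :: diffl s by [].
rewrite /canon_ip map_cons cfK_cons -/(canon_ip s) IH !cfK_cons /= intrN; ring.
Qed.

Lemma canon_ip_conseq s : conseq S (ip2np s) -> conseq S (ip2np (canon_ip s)).
Proof.
move=> h.
have hd : conseq S (ip2np (diffl s)).
  elim: (s) => [|x s' IH]; first exact: conseq_ip_nil.
  apply: conseq_ip_ext (conseq_ip_cat (conseq_ip_scale x.1 (canon_X x.2)) IH) _ => u.
  have -> : diffl (x :: s') = (x.1, x.2) :: (- x.1, canon x.2) :: diffl s' by [].
  by rewrite cfK_cat cfK_scale !cfK_cons !cfK_nil /= ?intrM ?intrN; ring.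
apply: conseq_ip_ext (conseq_ip_cat h (conseq_ip_scale (-1) hd)) _ => u.
by rewrite cfK_cat cfK_scale cfK_diff; ring.
Qed.

Lemma inst_conseq (g : gen) : (g.1 -> inseq (Tortken' K) S) ->
  conseq S (ip2np (canon_ip (inst g))).
Proof.
move=> hp; apply: canon_ip_conseq; case: g hp => [[] l] hp.
  exact: (iTp_conseq _ (hp isT)).
exact: iTk_conseq.
Qed.

Lemma combo_conseq (L : seq (int * gen)) :
  (forall x, x \in L -> x.2.1 -> inseq (Tortken' K) S) -> conseq S (ip2np (combo L)).
Proof.
elim: L => [|x L IH] h; first exact: conseq_ip_nil.
rewrite /combo /=; apply: conseq_ip_cat.
  by apply: conseq_ip_scale; apply: inst_conseq; apply: h; rewrite inE eqxx.
by apply: IH => y hy; apply: h; rewrite inE hy orbT.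
Qed.
End Refl.


Fixpoint brs (fuel : nat) (s : seq nat) : seq nterm :=
  match fuel with
  | 0 => [::]
  | fuel'.+1 =>
    if s is [:: x] then [:: NVar x] else
    flatten [seq [seq NMul a b | a <- brs fuel' (take k s), b <- brs fuel' (drop k s)]
            | k <- iota 1 (size s).-1]
  end.

Definition MON := flatten [seq brs 4 s | s <- permutations [:: 1; 2; 3; 4]%N].

Lemma size_leaves t : (0 < size (leaves t))%N.
Proof. by elim: t => //= a IHa b _; rewrite size_cat addn_gt0 IHa. Qed.

Lemma mem_brs u fuel : (size (leaves u) <= fuel)%N -> u \in brs fuel (leaves u).
Proof.
elim: u fuel => [i|a IHa b IHb] fuel; case: fuel => [|fuel] //=.
  by rewrite inE.
  by rewrite size_cat; have := size_leaves a; lia.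
rewrite size_cat => hs.
have ha := size_leaves a; have hb := size_leaves b.
have hsz := size_cat (leaves a) (leaves b).
case E: (leaves a ++ leaves b) hsz => [|y [|z rr]] /= hsz; try lia.
rewrite -E; apply/flattenP.
exists [seq NMul a0 b0 | a0 <- brs fuel (take (size (leaves a)) (leaves a ++ leaves b)),
                         b0 <- brs fuel (drop (size (leaves a)) (leaves a ++ leaves b))].
  apply: (map_f (fun k => [seq NMul a0 b0 | a0 <- brs fuel (take k (leaves a ++ leaves b)),
                         b0 <- brs fuel (drop k (leaves a ++ leaves b))])).
  by rewrite mem_iota; lia.
rewrite take_size_cat // drop_size_cat //.
apply: allpairs_f; [apply: IHa | apply: IHb]; lia.
Qed.

Lemma perm_MON u : perm_eq (leaves u) [:: 1; 2; 3; 4]%N -> u \in MON.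
Proof.
move=> hp; apply/flattenP; exists (brs 4 (leaves u)).
  by apply: map_f; rewrite mem_permutations.
by apply: mem_brs; rewrite (perm_size hp).
Qed.

Lemma MON_uniq : uniq MON.
Proof. by vm_compute. Qed.


Fixpoint fidx (w : nat -> nat) t : nat :=
  match t with NVar i => w i | NMul a b => (fidx w a + fidx w b).-1 end.
Fixpoint fcoef (N : nat) (w : nat -> nat) t : nat :=
  match t with
  | NVar i => (w i < N)%N
  | NMul a b => (fcoef N w a * fcoef N w b *
      (if (0 < fidx w a + fidx w b < N)%N then 'C(fidx w a + fidx w b, fidx w b) else 0))%N
  end.
Fixpoint fmax (w : nat -> nat) t : nat :=
  match t with NVar i => w i | NMul a b => maxn (maxn (fmax w a) (fmax w b)) (fidx w a + fidx w b) end.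

Lemma fcoef_indep N1 N2 w t : (fmax w t < N1)%N -> (fmax w t < N2)%N -> fcoef N1 w t = fcoef N2 w t.
Proof.
elim: t => [i|a IHa b IHb] /=; first by move=> -> ->.
rewrite !gtn_max => /andP[/andP[h1 h2] h3] /andP[/andP[h4 h5] h6].
by rewrite IHa // IHb // h3 h6 !andbT.
Qed.

Section DPE.
Variables (K : fieldType) (p m : nat).
Local Notation n := (p ^ m)%N.
Local Notation V := 'rV[K]_n.
Local Notation star := (@dp_star K p m).

Lemma starDl a b c : star (a + b) c = star a c + star b c.
Proof. by rewrite /dp_star dmulDl derD. Qed.
Lemma starDr a b c : star a (b + c) = star a b + star a c.
Proof. by rewrite /dp_star dmulDr derD. Qed.
Lemma starZl x a b : star (x *: a) b = x *: star a b.
Proof. by rewrite /dp_star dmulZl derZ. Qed.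
Lemma starZr x a b : star a (x *: b) = x *: star a b.
Proof. by rewrite /dp_star dmulZr derZ. Qed.

Lemma e_big k : (n <= k)%N -> e K p m k = 0.
Proof.
move=> h; apply/rowP => j; rewrite !mxE.
case: eqP => // hj; move: (ltn_ord j); rewrite hj ltnNge h.
by [].
Qed.

Lemma star_e i j : star (e K p m i) (e K p m j) =
  (if (0 < i + j < n)%N then 'C(i + j, j) else 0)%:R *: e K p m (i + j).-1.
Proof.
rewrite /dp_star mul_e derZ der_e scalerA -natrM; congr (_%:R *: _).
by case: (i + j < n)%N; case: (0 < i + j)%N; rewrite ?muln1 ?muln0.
Qed.

Lemma meval_e w t : meval star (fun i => e K p m (w i)) t = (fcoef n w t)%:R *: e K p m (fidx w t).
Proof.
elim: t => [i|a IHa b IHb] /=.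
  by case: ltnP => h; rewrite ?scale1r // e_big // scale0r.
rewrite IHa IHb starZl starZr star_e !scalerA -!natrM. by [].
Qed.
End DPE.


Definition dot (a b : seq int) : int := foldr (fun z acc => z.1 * z.2 + acc) 0 (zip a b).

Section Gen.
Variable K : fieldType.

Lemma sum_deltaK (U : seq nterm) (G : nterm -> K) t :
  uniq U -> \sum_(u <- U) G u * (u == t)%:R = if t \in U then G t else 0.
Proof.
move=> uU; case: ifP => tU.
  rewrite (big_rem t) //= eqxx mulr1 big_seq_cond big1 ?addr0 //.
  move=> u /andP[uR _]; have: u != t.
    by apply: contraTneq uR => ->; rewrite mem_rem_uniqF.
  by move/negbTE ->; rewrite mulr0.
rewrite big_seq_cond big1 // => u /andP[uU' _].
by case: eqP => [e|_]; [move: tU; rewrite -e uU' | rewrite mulr0].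
Qed.

Lemma mem_zip2 (A B : eqType) (a : seq A) (b : seq B) z : z \in zip a b -> z.2 \in b.
Proof.
elim: a b => [|x a1 IH] [|y b1] //=.
rewrite !inE => /orP[/eqP hz | h]; first by rewrite hz eqxx.
by rewrite (IH _ h) orbT.
Qed.

Lemma elim_lemma (NORM : seq nterm) (W : seq (seq nat)) (M : seq nat -> nterm -> int)
  (Ninv : nterm -> seq int) (d : int) (B : nterm -> K) :
  uniq NORM -> (d%:~R : K) != 0 ->
  (forall w, w \in W -> \sum_(y <- NORM) B y * (M w y)%:~R = 0) ->
  all (fun x => all (fun y => dot (Ninv x) (map (fun w => M w y) W) == d * (x == y)%:Z) NORM) NORM ->
  forall x, x \in NORM -> B x = 0.
Proof.
move=> uN hd hW /allP hc x xN.
have e1 : forall (a : seq int) (L : seq (seq nat)),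
  \sum_(z <- zip a L) (z.1)%:~R * (\sum_(y <- NORM) B y * (M z.2 y)%:~R)
  = \sum_(y <- NORM) B y * (dot a (map (fun w => M w y) L))%:~R.
  elim=> [|x0 a IH] [|w L] /=.
  - by rewrite big_nil big1 // => y _; rewrite mulr0.
  - by rewrite big_nil big1 // => y _; rewrite mulr0.
  - by rewrite big_nil big1 // => y _; rewrite mulr0.
  rewrite big_cons IH mulr_sumr -big_split; apply: eq_bigr => y _ /=.
  by rewrite intrD intrM; ring.
have e0 : \sum_(z <- zip (Ninv x) W) (z.1)%:~R * (\sum_(y <- NORM) B y * (M z.2 y)%:~R) = 0.
  rewrite big_seq_cond big1 // => z /andP[hz _].
  by rewrite hW ?mulr0 // (mem_zip2 hz).
move: e0; rewrite e1.
have /allP hx := hc x xN.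
rewrite big_seq_cond (eq_bigr (fun y => B y * d%:~R * (y == x)%:R)); last first.
  move=> y /andP[yN _]; rewrite (eqP (hx y yN)) intrM eq_sym.
  by case: (y == x); rewrite /= ?mulr1 ?mulr0 ?mulrA.
rewrite -big_seq_cond sum_deltaK // xN => /eqP.
by rewrite mulf_eq0 (negbTE hd) orbF => /eqP.
Qed.

Definition kp2np (l : seq (K * nterm)) : napoly K :=
  foldr (fun x acc => PAdd (PScale x.1 (mono K x.2)) acc) PZero l.

Lemma coef_kp2np l u : na_coef (kp2np l) u = \sum_(x <- l) x.1 * (x.2 == u)%:R.
Proof.
elim: l => [|x l IH]; first by rewrite big_nil.
by rewrite big_cons /= IH coef_mono.
Qed.

Definition Rsum (F : nterm -> napoly K) (l : seq nterm) : napoly K :=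
  foldr (fun t acc => PAdd (F t) acc) PZero l.

Lemma coef_Rsum F l u : na_coef (Rsum F l) u = \sum_(t <- l) na_coef (F t) u.
Proof. by elim: l => [|t l IH]; rewrite ?big_nil // big_cons /= IH. Qed.

Lemma conseq_Rsum S F l : (forall t, t \in l -> conseq S (F t)) -> conseq S (Rsum F l).
Proof.
elim: l => [|t l IH] h /=; first exact: conseq_zero.
apply: conseq_add; first by apply: h; rewrite inE eqxx.
by apply: IH => x hx; apply: h; rewrite inE hx orbT.
Qed.

Lemma eval_mono (V : lmodType K) (mul : V -> V -> V) v t :
  na_eval mul v (mono K t) = meval mul v t.
Proof. by elim: t => //= a -> b ->. Qed.

Lemma eval_kp2np (V : lmodType K) (mul : V -> V -> V) v l :
  na_eval mul v (kp2np l) = \sum_(x <- l) x.1 *: meval mul v x.2.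
Proof.
elim: l => [|x l IH]; first by rewrite big_nil.
by rewrite big_cons /= IH eval_mono.
Qed.
End Gen.


Definition wf (l : seq nat) : nat -> nat := fun i => nth 0%N (0%N :: l) i.
Definition Mint (N0 : nat) (l : seq nat) (y : nterm) : int :=
  (fcoef N0 (wf l) y * (fidx (wf l) y == sumn l - 3))%N.

Lemma coefD (K : fieldType) (f g : napoly K) u : na_coef (PAdd f g) u = na_coef f u + na_coef g u.
Proof. by []. Qed.
Lemma coefZ (K : fieldType) c (f : napoly K) u : na_coef (PScale c f) u = c * na_coef f u.
Proof. by []. Qed.
Lemma evalD (K : fieldType) (V : lmodType K) (mul : V -> V -> V) v f g :
  na_eval mul v (PAdd f g) = na_eval mul v f + na_eval mul v g.
Proof. by []. Qed.
Lemma evalZ (K : fieldType) (V : lmodType K) (mul : V -> V -> V) v c f :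
  na_eval mul v (PScale c f) = c *: na_eval mul v f.
Proof. by []. Qed.

Section Final.
Variables (K : fieldType) (p m : nat).
Local Notation n := (p ^ m)%N.
Local Notation star := (@dp_star K p m).
Local Notation ip2np := (@ip2np K).
Local Notation cfK := (@cfK K).
Variable S : seq (napoly K).
Hypothesis HC : inseq (Com K) S.
Hypothesis HT : inseq (Tortken K) S.
Hypothesis Hsound : forall g, inseq g S -> is_identity star g.
Variables (ext : bool) (q : nat).
Hypothesis HP : ext -> inseq (Tortken' K) S.
Hypothesis hq : (q%:R : K) = 0.
Variables (CAN NORM : seq nterm) (NF : nterm -> ip) (CERT : nterm -> seq (int * gen)).
Hypothesis c_cert : all (fun u => ipeq q (combo (CERT u)) ((1%Z, u) :: neg (NF u))) CAN.
Hypothesis c_ext : all (fun u => all (fun x => ext || ~~ x.2.1) (CERT u)) CAN.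
Hypothesis c_mon : all (fun t => canon t \in CAN) MON.
Hypothesis c_nf : all (fun u => all (fun x => x.2 \in NORM) (NF u)) CAN.
Hypothesis c_un : uniq NORM.
Variables (W : seq (seq nat)) (N0 : nat).
Hypothesis hW : forall w t, w \in W -> t \in NORM -> fcoef n (wf w) t = fcoef N0 (wf w) t.
Hypothesis hr : forall w, w \in W -> (sumn w - 3 < n)%N.
Variables (Ninv : nterm -> seq int) (d : int).
Hypothesis hd : (d%:~R : K) != 0.
Hypothesis c_inv : all (fun x => all (fun y =>
  dot (Ninv x) (map (fun w => Mint N0 w y) W) == d * (x == y)%:Z) NORM) NORM.

Lemma rel_conseq t : t \in MON -> conseq S (ip2np ((1%Z, t) :: neg (NF (canon t)))).
Proof.
move=> tM; have cu : canon t \in CAN := (allP c_mon) t tM.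
have h1 : conseq S (ip2np ((1%Z, canon t) :: neg (NF (canon t)))).
  apply: conseq_ip_ext.
    apply: (@combo_conseq K S HC HT (CERT (canon t))) => x hx hx1.
    apply: HP; have := (allP ((allP c_ext) _ cu)) x hx.
    by rewrite hx1 orbF.
  exact: (ipeqP hq ((allP c_cert) _ cu)).
apply: conseq_ip_ext (conseq_ip_cat (canon_X HC t) h1) _ => u.
rewrite cfK_cat !cfK_cons cfK_nil /=; ring.
Qed.

Theorem complete f : multilin4 f -> is_identity star f -> conseq S f.
Proof.
move=> ml fid.
pose c t := na_coef f t.
have supp : forall u, u \notin MON -> na_coef f u = 0.
  move=> u uM; case: (eqVneq (na_coef f u) 0) => // h.
  by rewrite perm_MON in uM; [|exact: ml].
pose P := kp2np [seq (c t, t) | t <- MON].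
have cP : forall u, na_coef P u = na_coef f u.
  move=> u; rewrite coef_kp2np big_map sum_deltaK ?MON_uniq //.
  by case: ifP => // /negbT /supp ->.
pose R := Rsum (fun t => PScale (c t) (ip2np ((1%Z, t) :: neg (NF (canon t))))) MON.
have hR : conseq S R.
  by apply: conseq_Rsum => t tM; apply: conseq_scale; apply: rel_conseq.
pose B y := \sum_(t <- MON) c t * (icoef (NF (canon t)) y)%:~R.
pose Q := kp2np [seq (B y, y) | y <- NORM].
have nfE : forall u0 s, all (fun x => x.2 \in NORM) s ->
    cfK s u0 = \sum_(y <- NORM) (icoef s y)%:~R * (y == u0)%:R.
  move=> u0 s hs; rewrite sum_deltaK // cfK_icoef; case: ifP => // /negbT hu.
  rewrite icoef_out //; apply/mapP => -[x xs hx]; move: hu.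
  by rewrite hx ((allP hs) x xs).
have cRPQ : forall u, na_coef R u = na_coef P u - na_coef Q u.
  move=> u; rewrite coef_Rsum !coef_kp2np !big_map /=.
  have -> : \sum_(y <- NORM) B y * (y == u)%:R = \sum_(t <- MON) c t * cfK (NF (canon t)) u.
    rewrite /B; under eq_bigr do rewrite mulr_suml.
    rewrite exchange_big /=; apply: eq_big_seq => t tM.
    rewrite (nfE u) ?mulr_sumr; last exact: (allP c_nf) _ ((allP c_mon) t tM).
    by apply: eq_bigr => y _; rewrite mulrA.
  rewrite -sumrB; apply: eq_bigr => t _.
  by rewrite /= coef_mono coef_ip2np /neg cfK_scale; ring.
have Qid : is_identity star Q.
  move=> v.
  have e1 : na_eval star v Q = na_eval star v (PAdd P (PScale (-1) R)).
    apply: (eval_coef (@starDl K p m) (@starDr K p m) (@starZl K p m) (@starZr K p m)) => u.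
    by rewrite coefD coefZ cRPQ; ring.
  rewrite e1 evalD evalZ.
  rewrite (eval_coef (@starDl K p m) (@starDr K p m) (@starZl K p m) (@starZr K p m) cP v).
  rewrite fid (sound (@starDl K p m) (@starDr K p m) (@starZl K p m) (@starZr K p m) Hsound hR v).
  by rewrite scaler0 addr0.
have Beq : forall w, w \in W -> \sum_(y <- NORM) B y * (Mint N0 w y)%:~R = 0.
  move=> w wW; have := Qid (fun i => e K p m (wf w i)).
  rewrite eval_kp2np big_map.
  under eq_bigr => y _ do rewrite meval_e scalerA.
  move/rowP => /(_ (Ordinal (hr wW))); rewrite !mxE summxE => h.
  rewrite -[RHS]h big_seq [RHS]big_seq; apply: eq_bigr => y yN.
  rewrite !mxE /Mint -pmulrn natrM -mulrA (hW wW yN) eq_sym.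
  by [].
have B0 : forall y, y \in NORM -> B y = 0 := elim_lemma c_un hd Beq c_inv.
have cQ0 : forall u, na_coef Q u = 0.
  move=> u; rewrite coef_kp2np big_map big_seq big1 // => y yN.
  by rewrite B0 // mul0r.
by apply: conseq_ext hR _ => u; rewrite cRPQ cQ0 subr0 cP.
Qed.
End Final.


Definition CAN : seq nterm := [:: NMul (NMul (NVar 1) (NVar 2)) (NMul (NVar 3) (NVar 4)); NMul (NMul (NVar 1) (NVar 3)) (NMul (NVar 2) (NVar 4)); NMul (NMul (NVar 1) (NVar 4)) (NMul (NVar 2) (NVar 3)); NMul (NVar 1) (NMul (NVar 2) (NMul (NVar 3) (NVar 4))); NMul (NVar 1) (NMul (NVar 3) (NMul (NVar 2) (NVar 4))); NMul (NVar 1) (NMul (NVar 4) (NMul (NVar 2) (NVar 3))); NMul (NVar 2) (NMul (NVar 1) (NMul (NVar 3) (NVar 4))); NMul (NVar 2) (NMul (NVar 3) (NMul (NVar 1) (NVar 4))); NMul (NVar 2) (NMul (NVar 4) (NMul (NVar 1) (NVar 3))); NMul (NVar 3) (NMul (NVar 1) (NMul (NVar 2) (NVar 4))); NMul (NVar 3) (NMul (NVar 2) (NMul (NVar 1) (NVar 4))); NMul (NVar 3) (NMul (NVar 4) (NMul (NVar 1) (NVar 2))); NMul (NVar 4) (NMul (NVar 1) (NMul (NVar 2) (NVar 3))); NMul (NVar 4) (NMul (NVar 2) (NMul (NVar 1) (NVar 3))); NMul (NVar 4) (NMul (NVar 3) (NMul (NVar 1) (NVar 2)))].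

Definition NORMg : seq nterm := [:: NMul (NMul (NVar 1) (NVar 4)) (NMul (NVar 2) (NVar 3)); NMul (NVar 1) (NMul (NVar 4) (NMul (NVar 2) (NVar 3))); NMul (NVar 2) (NMul (NVar 1) (NMul (NVar 3) (NVar 4))); NMul (NVar 2) (NMul (NVar 4) (NMul (NVar 1) (NVar 3))); NMul (NVar 3) (NMul (NVar 1) (NMul (NVar 2) (NVar 4))); NMul (NVar 3) (NMul (NVar 2) (NMul (NVar 1) (NVar 4))); NMul (NVar 3) (NMul (NVar 4) (NMul (NVar 1) (NVar 2))); NMul (NVar 4) (NMul (NVar 1) (NMul (NVar 2) (NVar 3))); NMul (NVar 4) (NMul (NVar 2) (NMul (NVar 1) (NVar 3))); NMul (NVar 4) (NMul (NVar 3) (NMul (NVar 1) (NVar 2)))].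

Definition NFg (u : nterm) : ip :=
  if u == NMul (NMul (NVar 1) (NVar 2)) (NMul (NVar 3) (NVar 4)) then [:: (1%Z, NMul (NMul (NVar 1) (NVar 4)) (NMul (NVar 2) (NVar 3))); ((-1)%Z, NMul (NVar 2) (NMul (NVar 1) (NMul (NVar 3) (NVar 4)))); (1%Z, NMul (NVar 2) (NMul (NVar 4) (NMul (NVar 1) (NVar 3)))); (1%Z, NMul (NVar 3) (NMul (NVar 2) (NMul (NVar 1) (NVar 4)))); ((-1)%Z, NMul (NVar 3) (NMul (NVar 4) (NMul (NVar 1) (NVar 2)))); (1%Z, NMul (NVar 4) (NMul (NVar 1) (NMul (NVar 2) (NVar 3)))); ((-1)%Z, NMul (NVar 4) (NMul (NVar 2) (NMul (NVar 1) (NVar 3))))] else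
  if u == NMul (NMul (NVar 1) (NVar 3)) (NMul (NVar 2) (NVar 4)) then [:: (1%Z, NMul (NMul (NVar 1) (NVar 4)) (NMul (NVar 2) (NVar 3))); ((-1)%Z, NMul (NVar 3) (NMul (NVar 1) (NMul (NVar 2) (NVar 4)))); (1%Z, NMul (NVar 3) (NMul (NVar 2) (NMul (NVar 1) (NVar 4)))); (1%Z, NMul (NVar 4) (NMul (NVar 1) (NMul (NVar 2) (NVar 3)))); ((-1)%Z, NMul (NVar 4) (NMul (NVar 2) (NMul (NVar 1) (NVar 3))))] else
  if u == NMul (NVar 1) (NMul (NVar 2) (NMul (NVar 3) (NVar 4))) then [:: (1%Z, NMul (NVar 1) (NMul (NVar 4) (NMul (NVar 2) (NVar 3)))); (1%Z, NMul (NVar 2) (NMul (NVar 1) (NMul (NVar 3) (NVar 4)))); ((-1)%Z, NMul (NVar 2) (NMul (NVar 4) (NMul (NVar 1) (NVar 3)))); ((-1)%Z, NMul (NVar 4) (NMul (NVar 1) (NMul (NVar 2) (NVar 3)))); (1%Z, NMul (NVar 4) (NMul (NVar 2) (NMul (NVar 1) (NVar 3))))] else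
  if u == NMul (NVar 1) (NMul (NVar 3) (NMul (NVar 2) (NVar 4))) then [:: (1%Z, NMul (NVar 1) (NMul (NVar 4) (NMul (NVar 2) (NVar 3)))); (1%Z, NMul (NVar 3) (NMul (NVar 1) (NMul (NVar 2) (NVar 4)))); ((-1)%Z, NMul (NVar 3) (NMul (NVar 4) (NMul (NVar 1) (NVar 2)))); ((-1)%Z, NMul (NVar 4) (NMul (NVar 1) (NMul (NVar 2) (NVar 3)))); (1%Z, NMul (NVar 4) (NMul (NVar 3) (NMul (NVar 1) (NVar 2))))] else
  if u == NMul (NVar 2) (NMul (NVar 3) (NMul (NVar 1) (NVar 4))) then [:: (1%Z, NMul (NVar 2) (NMul (NVar 4) (NMul (NVar 1) (NVar 3)))); (1%Z, NMul (NVar 3) (NMul (NVar 2) (NMul (NVar 1) (NVar 4)))); ((-1)%Z, NMul (NVar 3) (NMul (NVar 4) (NMul (NVar 1) (NVar 2)))); ((-1)%Z, NMul (NVar 4) (NMul (NVar 2) (NMul (NVar 1) (NVar 3)))); (1%Z, NMul (NVar 4) (NMul (NVar 3) (NMul (NVar 1) (NVar 2))))] else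
  [:: (1%Z, u)].

Definition CERTg (u : nterm) : seq (int * gen) :=
  if u == NMul (NMul (NVar 1) (NVar 2)) (NMul (NVar 3) (NVar 4)) then [:: (1%Z, (false, [:: 1; 2; 4; 3])); (1%Z, (false, [:: 1; 3; 2; 4]))] else
  if u == NMul (NMul (NVar 1) (NVar 3)) (NMul (NVar 2) (NVar 4)) then [:: (1%Z, (false, [:: 1; 3; 2; 4]))] else
  if u == NMul (NVar 1) (NMul (NVar 2) (NMul (NVar 3) (NVar 4))) then [:: ((-1)%Z, (false, [:: 1; 2; 4; 3])); ((-1)%Z, (false, [:: 1; 3; 2; 4])); (1%Z, (false, [:: 2; 1; 4; 3]))] else
  if u == NMul (NVar 1) (NMul (NVar 3) (NMul (NVar 2) (NVar 4))) then [:: ((-1)%Z, (false, [:: 1; 3; 2; 4])); ((-1)%Z, (false, [:: 2; 1; 3; 4])); (1%Z, (false, [:: 2; 1; 4; 3]))] else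
  if u == NMul (NVar 2) (NMul (NVar 3) (NMul (NVar 1) (NVar 4))) then [:: ((-1)%Z, (false, [:: 1; 2; 3; 4])); (1%Z, (false, [:: 1; 2; 4; 3])); (1%Z, (false, [:: 1; 3; 2; 4]))] else
  [::].

Definition Wg : seq (seq nat) := [:: [:: 1; 2; 0; 1]; [:: 0; 0; 4; 0]; [:: 1; 1; 1; 1]; [:: 3; 0; 0; 0]; [:: 1; 2; 1; 0]; [:: 0; 0; 1; 2]; [:: 0; 2; 1; 0]; [:: 1; 3; 1; 1]; [:: 3; 1; 1; 0]; [:: 0; 2; 0; 2]].

Definition Ninvg (u : nterm) : seq int :=
  if u == NMul (NMul (NVar 1) (NVar 4)) (NMul (NVar 2) (NVar 3)) then [:: (-80)%Z; (-64)%Z; 44%Z; 320%Z; 112%Z; (-80)%Z; (-288)%Z; 6%Z; (-64)%Z; 16%Z] else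
  if u == NMul (NVar 1) (NMul (NVar 4) (NMul (NVar 2) (NVar 3))) then [:: (-120)%Z; 0%Z; 26%Z; 640%Z; 168%Z; (-56)%Z; (-368)%Z; 9%Z; (-96)%Z; 56%Z] else
  if u == NMul (NVar 2) (NMul (NVar 1) (NMul (NVar 3) (NVar 4))) then [:: (-8)%Z; 64%Z; (-10)%Z; 192%Z; 88%Z; 56%Z; (-144)%Z; (-1)%Z; (-32)%Z; 8%Z] else
  if u == NMul (NVar 2) (NMul (NVar 4) (NMul (NVar 1) (NVar 3))) then [:: 104%Z; (-64)%Z; (-30)%Z; (-960)%Z; (-376)%Z; 40%Z; 592%Z; 5%Z; 160%Z; (-104)%Z] else
  if u == NMul (NVar 3) (NMul (NVar 1) (NMul (NVar 2) (NVar 4))) then [:: 56%Z; 0%Z; (-42)%Z; (-576)%Z; (-168)%Z; 56%Z; 304%Z; (-1)%Z; 96%Z; 8%Z] else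
  if u == NMul (NVar 3) (NMul (NVar 2) (NMul (NVar 1) (NVar 4))) then [:: 64%Z; (-64)%Z; 32%Z; 0%Z; 0%Z; 0%Z; 192%Z; (-16)%Z; 0%Z; 0%Z] else
  if u == NMul (NVar 3) (NMul (NVar 4) (NMul (NVar 1) (NVar 2))) then [:: (-56)%Z; 128%Z; 10%Z; 576%Z; 168%Z; (-56)%Z; (-432)%Z; 9%Z; (-96)%Z; (-8)%Z] else
  if u == NMul (NVar 4) (NMul (NVar 1) (NMul (NVar 2) (NVar 3))) then [:: 152%Z; 0%Z; (-2)%Z; (-704)%Z; (-200)%Z; 24%Z; 496%Z; (-13)%Z; 96%Z; (-88)%Z] else
  if u == NMul (NVar 4) (NMul (NVar 2) (NMul (NVar 1) (NVar 3))) then [:: (-128)%Z; 128%Z; 16%Z; 832%Z; 320%Z; (-64)%Z; (-576)%Z; 0%Z; (-128)%Z; 128%Z] else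
  if u == NMul (NVar 4) (NMul (NVar 3) (NMul (NVar 1) (NVar 2))) then [:: 16%Z; (-128)%Z; (-28)%Z; (-320)%Z; (-112)%Z; 80%Z; 224%Z; 2%Z; 64%Z; (-16)%Z] else
  [::].

Definition dg : int := 128.

Definition NORM3 : seq nterm := [:: NMul (NVar 1) (NMul (NVar 4) (NMul (NVar 2) (NVar 3))); NMul (NVar 2) (NMul (NVar 1) (NMul (NVar 3) (NVar 4))); NMul (NVar 2) (NMul (NVar 4) (NMul (NVar 1) (NVar 3))); NMul (NVar 3) (NMul (NVar 1) (NMul (NVar 2) (NVar 4))); NMul (NVar 3) (NMul (NVar 2) (NMul (NVar 1) (NVar 4))); NMul (NVar 3) (NMul (NVar 4) (NMul (NVar 1) (NVar 2))); NMul (NVar 4) (NMul (NVar 1) (NMul (NVar 2) (NVar 3))); NMul (NVar 4) (NMul (NVar 2) (NMul (NVar 1) (NVar 3))); NMul (NVar 4) (NMul (NVar 3) (NMul (NVar 1) (NVar 2)))].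

Definition NF3 (u : nterm) : ip :=
  if u == NMul (NMul (NVar 1) (NVar 2)) (NMul (NVar 3) (NVar 4)) then [:: (1%Z, NMul (NVar 1) (NMul (NVar 4) (NMul (NVar 2) (NVar 3)))); (2%Z, NMul (NVar 2) (NMul (NVar 1) (NMul (NVar 3) (NVar 4)))); (2%Z, NMul (NVar 2) (NMul (NVar 4) (NMul (NVar 1) (NVar 3)))); (1%Z, NMul (NVar 3) (NMul (NVar 4) (NMul (NVar 1) (NVar 2)))); (2%Z, NMul (NVar 4) (NMul (NVar 1) (NMul (NVar 2) (NVar 3)))); (1%Z, NMul (NVar 4) (NMul (NVar 2) (NMul (NVar 1) (NVar 3)))); (1%Z, NMul (NVar 4) (NMul (NVar 3) (NMul (NVar 1) (NVar 2))))] else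
  if u == NMul (NMul (NVar 1) (NVar 3)) (NMul (NVar 2) (NVar 4)) then [:: (1%Z, NMul (NVar 1) (NMul (NVar 4) (NMul (NVar 2) (NVar 3)))); (1%Z, NMul (NVar 2) (NMul (NVar 4) (NMul (NVar 1) (NVar 3)))); (2%Z, NMul (NVar 3) (NMul (NVar 1) (NMul (NVar 2) (NVar 4)))); (2%Z, NMul (NVar 3) (NMul (NVar 4) (NMul (NVar 1) (NVar 2)))); (2%Z, NMul (NVar 4) (NMul (NVar 1) (NMul (NVar 2) (NVar 3)))); (1%Z, NMul (NVar 4) (NMul (NVar 2) (NMul (NVar 1) (NVar 3)))); (1%Z, NMul (NVar 4) (NMul (NVar 3) (NMul (NVar 1) (NVar 2))))] else
  if u == NMul (NMul (NVar 1) (NVar 4)) (NMul (NVar 2) (NVar 3)) then [:: (1%Z, NMul (NVar 1) (NMul (NVar 4) (NMul (NVar 2) (NVar 3)))); (1%Z, NMul (NVar 2) (NMul (NVar 4) (NMul (NVar 1) (NVar 3)))); (2%Z, NMul (NVar 3) (NMul (NVar 2) (NMul (NVar 1) (NVar 4)))); (2%Z, NMul (NVar 3) (NMul (NVar 4) (NMul (NVar 1) (NVar 2)))); (1%Z, NMul (NVar 4) (NMul (NVar 1) (NMul (NVar 2) (NVar 3)))); (2%Z, NMul (NVar 4) (NMul (NVar 2) (NMul (NVar 1) (NVar 3)))); (1%Z, NMul (NVar 4) (NMul (NVar 3) (NMul (NVar 1) (NVar 2))))] else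
  if u == NMul (NVar 1) (NMul (NVar 2) (NMul (NVar 3) (NVar 4))) then [:: (1%Z, NMul (NVar 1) (NMul (NVar 4) (NMul (NVar 2) (NVar 3)))); (1%Z, NMul (NVar 2) (NMul (NVar 1) (NMul (NVar 3) (NVar 4)))); (2%Z, NMul (NVar 2) (NMul (NVar 4) (NMul (NVar 1) (NVar 3)))); (2%Z, NMul (NVar 4) (NMul (NVar 1) (NMul (NVar 2) (NVar 3)))); (1%Z, NMul (NVar 4) (NMul (NVar 2) (NMul (NVar 1) (NVar 3))))] else
  if u == NMul (NVar 1) (NMul (NVar 3) (NMul (NVar 2) (NVar 4))) then [:: (1%Z, NMul (NVar 1) (NMul (NVar 4) (NMul (NVar 2) (NVar 3)))); (1%Z, NMul (NVar 3) (NMul (NVar 1) (NMul (NVar 2) (NVar 4)))); (2%Z, NMul (NVar 3) (NMul (NVar 4) (NMul (NVar 1) (NVar 2)))); (2%Z, NMul (NVar 4) (NMul (NVar 1) (NMul (NVar 2) (NVar 3)))); (1%Z, NMul (NVar 4) (NMul (NVar 3) (NMul (NVar 1) (NVar 2))))] else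
  if u == NMul (NVar 2) (NMul (NVar 3) (NMul (NVar 1) (NVar 4))) then [:: (1%Z, NMul (NVar 2) (NMul (NVar 4) (NMul (NVar 1) (NVar 3)))); (1%Z, NMul (NVar 3) (NMul (NVar 2) (NMul (NVar 1) (NVar 4)))); (2%Z, NMul (NVar 3) (NMul (NVar 4) (NMul (NVar 1) (NVar 2)))); (2%Z, NMul (NVar 4) (NMul (NVar 2) (NMul (NVar 1) (NVar 3)))); (1%Z, NMul (NVar 4) (NMul (NVar 3) (NMul (NVar 1) (NVar 2))))] else
  [:: (1%Z, u)].

Definition CERT3 (u : nterm) : seq (int * gen) :=
  if u == NMul (NMul (NVar 1) (NVar 2)) (NMul (NVar 3) (NVar 4)) then [:: (1%Z, (false, [:: 1; 2; 4; 3])); (1%Z, (false, [:: 1; 3; 2; 4])); (2%Z, (false, [:: 2; 1; 3; 4])); (1%Z, (false, [:: 2; 1; 4; 3])); (2%Z, (true, [:: 1; 2; 3; 4]))] else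
  if u == NMul (NMul (NVar 1) (NVar 3)) (NMul (NVar 2) (NVar 4)) then [:: (1%Z, (false, [:: 1; 3; 2; 4])); (2%Z, (false, [:: 2; 1; 3; 4])); (1%Z, (false, [:: 2; 1; 4; 3])); (2%Z, (true, [:: 1; 2; 3; 4]))] else
  if u == NMul (NMul (NVar 1) (NVar 4)) (NMul (NVar 2) (NVar 3)) then [:: (2%Z, (false, [:: 2; 1; 3; 4])); (1%Z, (false, [:: 2; 1; 4; 3])); (2%Z, (true, [:: 1; 2; 3; 4]))] else
  if u == NMul (NVar 1) (NMul (NVar 2) (NMul (NVar 3) (NVar 4))) then [:: (2%Z, (false, [:: 1; 2; 4; 3])); (2%Z, (false, [:: 1; 3; 2; 4])); (1%Z, (false, [:: 2; 1; 4; 3]))] else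
  if u == NMul (NVar 1) (NMul (NVar 3) (NMul (NVar 2) (NVar 4))) then [:: (2%Z, (false, [:: 1; 3; 2; 4])); (2%Z, (false, [:: 2; 1; 3; 4])); (1%Z, (false, [:: 2; 1; 4; 3]))] else
  if u == NMul (NVar 2) (NMul (NVar 3) (NMul (NVar 1) (NVar 4))) then [:: (2%Z, (false, [:: 1; 2; 3; 4])); (1%Z, (false, [:: 1; 2; 4; 3])); (1%Z, (false, [:: 1; 3; 2; 4]))] else
  [::].

Definition W3 : seq (seq nat) := [:: [:: 1; 2; 1; 0]; [:: 2; 1; 0; 1]; [:: 1; 2; 0; 0]; [:: 2; 0; 1; 0]; [:: 1; 0; 2; 0]; [:: 0; 2; 0; 1]; [:: 2; 1; 0; 0]; [:: 0; 0; 2; 1]; [:: 0; 0; 1; 2]].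

Definition Ninv3 (u : nterm) : seq int :=
  if u == NMul (NVar 1) (NMul (NVar 4) (NMul (NVar 2) (NVar 3))) then [:: (-32)%Z; 24%Z; 30%Z; 8%Z; (-12)%Z; (-4)%Z; (-38)%Z; (-50)%Z; 106%Z] else
  if u == NMul (NVar 2) (NMul (NVar 1) (NMul (NVar 3) (NVar 4))) then [:: (-8)%Z; 16%Z; 0%Z; (-8)%Z; 12%Z; 4%Z; (-12)%Z; (-40)%Z; 44%Z] else
  if u == NMul (NVar 2) (NMul (NVar 4) (NMul (NVar 1) (NVar 3))) then [:: 32%Z; (-24)%Z; (-35)%Z; (-8)%Z; 12%Z; 4%Z; 33%Z; 65%Z; (-91)%Z] else
  if u == NMul (NVar 3) (NMul (NVar 1) (NMul (NVar 2) (NVar 4))) then [:: (-8)%Z; 16%Z; 30%Z; 12%Z; (-18)%Z; (-6)%Z; (-32)%Z; (-30)%Z; 44%Z] else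
  if u == NMul (NVar 3) (NMul (NVar 2) (NMul (NVar 1) (NVar 4))) then [:: 8%Z; (-16)%Z; (-25)%Z; (-12)%Z; 18%Z; 6%Z; 37%Z; 15%Z; (-19)%Z] else
  if u == NMul (NVar 3) (NMul (NVar 4) (NMul (NVar 1) (NVar 2))) then [:: 24%Z; (-8)%Z; (-20)%Z; (-16)%Z; 4%Z; 28%Z; 16%Z; 20%Z; (-72)%Z] else
  if u == NMul (NVar 4) (NMul (NVar 1) (NMul (NVar 2) (NVar 3))) then [:: 40%Z; (-40)%Z; (-35)%Z; (-20)%Z; 30%Z; 10%Z; 55%Z; 85%Z; (-145)%Z] else
  if u == NMul (NVar 4) (NMul (NVar 2) (NMul (NVar 1) (NVar 3))) then [:: (-40)%Z; 40%Z; 45%Z; 20%Z; (-30)%Z; (-10)%Z; (-45)%Z; (-75)%Z; 115%Z] else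
  if u == NMul (NVar 4) (NMul (NVar 3) (NMul (NVar 1) (NVar 2))) then [:: (-32)%Z; 24%Z; 40%Z; 48%Z; (-32)%Z; (-24)%Z; (-48)%Z; (-40)%Z; 96%Z] else
  [::].

Definition d3 : int := 40.

Lemma chk_mon : all (fun t => canon t \in CAN) MON. Proof. by vm_compute. Qed.

Lemma chk_g1 : all (fun u => ipeq 0 (combo (CERTg u)) ((1%Z, u) :: neg (NFg u))) CAN.
Proof. by vm_compute. Qed.
Lemma chk_g2 : all (fun u => all (fun x => false || ~~ x.2.1) (CERTg u)) CAN.
Proof. by vm_compute. Qed.
Lemma chk_g3 : all (fun u => all (fun x => x.2 \in NORMg) (NFg u)) CAN.
Proof. by vm_compute. Qed.
Lemma chk_g4 : uniq NORMg. Proof. by vm_compute. Qed.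
Lemma chk_g5 : all (fun x => all (fun y =>
  dot (Ninvg x) (map (fun w => Mint 5 w y) Wg) == dg * (x == y)%:Z) NORMg) NORMg.
Proof. by vm_compute. Qed.
Lemma chk_g6 : all (fun w => all (fun t => fmax (wf w) t < 5)%N NORMg) Wg.
Proof. by vm_compute. Qed.
Lemma chk_g7 : all (fun w => sumn w - 3 < 5)%N Wg.
Proof. by vm_compute. Qed.

Lemma chk_31 : all (fun u => ipeq 3 (combo (CERT3 u)) ((1%Z, u) :: neg (NF3 u))) CAN.
Proof. by vm_compute. Qed.
Lemma chk_33 : all (fun u => all (fun x => x.2 \in NORM3) (NF3 u)) CAN.
Proof. by vm_compute. Qed.
Lemma chk_34 : uniq NORM3. Proof. by vm_compute. Qed.
Lemma chk_35 : all (fun x => all (fun y =>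
  dot (Ninv3 x) (map (fun w => Mint 3 w y) W3) == d3 * (x == y)%:Z) NORM3) NORM3.
Proof. by vm_compute. Qed.
Lemma chk_37 : all (fun w => sumn w - 3 < 3)%N W3.
Proof. by vm_compute. Qed.

Lemma n5 p m : prime p -> (2 < p)%N -> (1 <= m)%N -> ~~ ((p == 3) && (m == 1))%N -> (5 <= p ^ m)%N.
Proof.
move=> pp p2 m1 h.
have pm : (p <= p ^ m)%N by rewrite -{1}(expn1 p) leq_pexp2l //; lia.
case: (eqVneq p 3) => [e3|ne3].
  subst p; have m2 : (2 <= m)%N by move: h; rewrite eqxx /=; lia.
  by apply: leq_trans (_ : 3 ^ 2 <= 3 ^ m)%N; rewrite ?leq_pexp2l.
have : p != 4 by apply: contraTneq pp => ->.
move=> ne4; apply: leq_trans pm; lia.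
Qed.

Unset Implicit Arguments.

Theorem mainTheorem14 (K : fieldType) (p m : nat) :
  p \in [pchar K] -> (2 < p)%N -> (1 <= m)%N ->
  (forall g, inseq g (O1_gens K p m) -> is_identity (@dp_star K p m) g) /\
  (forall f : napoly K, multilin4 f ->
     (is_identity (@dp_star K p m) f <-> conseq (O1_gens K p m) f)).
Proof.
move=> pc p2 m1.
have pp : prime p := pcharf_prime pc.
have gens : forall g, inseq g (O1_gens K p m) -> is_identity (@dp_star K p m) g.
  rewrite /O1_gens; case: ifP => [/andP[/eqP p3 /eqP m1']|_] g /=.
    subst p m; case=> [<-|[<-|[<-|[]]]].
    - exact: tortken_id.
    - exact: com_id.
    - exact: tk3_id.
  case=> [<-|[<-|[]]].
  - exact: tortken_id.
  - exact: com_id.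
split => // f ml; split; last first.
  move=> h.
  exact: (sound (@starDl K p m) (@starDr K p m) (@starZl K p m) (@starZr K p m) gens h).
move=> fid.
case E: ((p == 3) && (m == 1))%N.
  case/andP: E => /eqP p3 /eqP m1'; subst p m.
  have HC : inseq (Com K) (O1_gens K 3 1) by right; left.
  have HT : inseq (Tortken K) (O1_gens K 3 1) by left.
  have HP : true -> inseq (Tortken' K) (O1_gens K 3 1) by move=> _; right; right; left.
  have hq : (3%:R : K) = 0 by apply/eqP; rewrite -(dvdn_pcharf pc).
  have c_ext : all (fun u => all (fun x : int * gen => true || ~~ x.2.1) (CERT3 u)) CAN.
    by apply/allP => u _; apply/allP.
  have hW : forall w t, w \in W3 -> t \in NORM3 -> fcoef (3 ^ 1) (wf w) t = fcoef 3 (wf w) t.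
    by move=> w t _ _; rewrite expn1.
  have hr : forall w, w \in W3 -> (sumn w - 3 < 3 ^ 1)%N.
    by move=> w wW; rewrite expn1; apply: (allP chk_37).
  have hd : (d3%:~R : K) != 0.
    rewrite /d3 -pmulrn -(dvdn_pcharf pc); by [].
  exact: (complete HC HT gens HP hq chk_31 c_ext chk_mon chk_33 chk_34 hW hr hd chk_35 ml fid).
have n5' := n5 pp p2 m1 (negbT E).
move: gens fid; rewrite /O1_gens E => gens fid.
have HC : inseq (Com K) [:: Tortken K; Com K] by right; left.
have HT : inseq (Tortken K) [:: Tortken K; Com K] by left.
have HP : false -> inseq (Tortken' K) [:: Tortken K; Com K] by [].
have hq : (0%:R : K) = 0 by [].
have hW : forall w t, w \in Wg -> t \in NORMg -> fcoef (p ^ m) (wf w) t = fcoef 5 (wf w) t.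
  move=> w t wW tN; have h := (allP ((allP chk_g6) w wW)) t tN.
  by apply: fcoef_indep => //; apply: leq_trans n5'.
have hr : forall w, w \in Wg -> (sumn w - 3 < p ^ m)%N.
  by move=> w wW; apply: leq_trans n5'; apply: (allP chk_g7).
have hd : (dg%:~R : K) != 0.
  have h2 : (2%:R : K) != 0.
    by rewrite -(dvdn_pcharf pc); apply/negP => /(dvdn_leq (isT : (0 < 2)%N)); lia.
  have -> : (dg%:~R : K) = 2%:R ^+ 7 by rewrite /dg; ring.
  by rewrite expf_neq0.
exact: (complete HC HT gens HP hq chk_g1 chk_g2 chk_mon chk_g3 chk_g4 hW hr hd chk_g5 ml fid).
Qed.
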